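(* Let $\kappa>0$ and $0<\alpha\le2$, and let $d_{\kappa,\alpha}(p,q)=\|p^{-1}\cdot q\|_{\kappa,\alpha}$ where $\|(x,y,z)\|_{\kappa,\alpha}=\kappa\sqrt{x^2+y^2}+\big((x^2+y^2)^2+4\alpha^2z^2\big)^{1/4}$. Then BCP does not hold for $d_{\kappa,\alpha}$ on $\mathbb H$.
   Context: $\mathbb H=\mathbb R^3$ with group law $(x,y,z)\cdot(x',y',z')=(x+x',y+y',z+z'+\tfrac12(xy'-yx'))$. BCP holds for $d$ if there is $N\geq1$ such that for every bounded $A$ and every family $\mathcal B$ of closed balls with each point of $A$ the center of some ball of $\mathcal B$, some subfamily $\mathcal F\subset\mathcal B$ satisfies $\chi_A\le\sum_{B\in\mathcal F}\chi_B\le N$. *)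

(* Defs.v *)
From Stdlib Require Import Reals List.
Open Scope R_scope.

Definition H : Type := (R * R * R)%type.

Definition hmul (p q : H) : H :=
  match p, q with
  | (x, y, z), (x', y', z') =>
      (x + x', y + y', z + z' + / 2 * (x * y' - y * x'))
  end.

Definition hinv (p : H) : H :=
  match p with (x, y, z) => (- x, - y, - z) end.

(* ||(x,y,z)||_{kappa,alpha} = kappa sqrt(x^2+y^2) + ((x^2+y^2)^2 + 4 alpha^2 z^2)^{1/4};
   the fourth root of a nonnegative number is written sqrt (sqrt _). *)
Definition knorm (kappa alpha : R) (p : H) : R :=
  match p with
  | (x, y, z) =>
      kappa * sqrt (x ^ 2 + y ^ 2)
      + sqrt (sqrt ((x ^ 2 + y ^ 2) ^ 2 + 4 * alpha ^ 2 * z ^ 2))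
  end.

Definition dka (kappa alpha : R) (p q : H) : R :=
  knorm kappa alpha (hmul (hinv p) q).

Definition cball (d : H -> H -> R) (c : H) (r : R) : H -> Prop :=
  fun q => d c q <= r.

Definition is_ball_at (d : H -> H -> R) (S : H -> Prop) (c : H) : Prop :=
  exists r, 0 < r /\ S = cball d c r.

Definition is_ball (d : H -> H -> R) (S : H -> Prop) : Prop :=
  exists c, is_ball_at d S c.

Definition bounded (d : H -> H -> R) (A : H -> Prop) : Prop :=
  exists c R0, forall a, A a -> d c a <= R0.

(* sum_{B in F} chi_B (p) <= N : at most N distinct members of F contain p *)
Definition mult_le (F : (H -> Prop) -> Prop) (N : nat) : Prop :=
  forall (p : H) (l : list (H -> Prop)),
    NoDup l -> (forall S, In S l -> F S /\ S p) -> (length l <= N)%nat.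

Definition BCP (d : H -> H -> R) : Prop :=
  exists N : nat, (1 <= N)%nat /\
    forall (A : H -> Prop) (B : (H -> Prop) -> Prop),
      bounded d A ->
      (forall S, B S -> is_ball d S) ->
      (forall a, A a -> exists S, B S /\ is_ball_at d S a) ->
      exists F : (H -> Prop) -> Prop,
        (forall S, F S -> B S) /\
        (forall a, A a -> exists S, F S /\ S a) /\
        mult_le F N.

(* Main.v *)
Require Import Defs.
From Stdlib Require Import Reals List Lra Psatz.
Open Scope R_scope.
Definition O0 : H := (0,0,0).
Lemma dka_plane (k a x1 z1 x2 z2 : R) :
  dka k a (x1,0,z1) (x2,0,z2) = k * Rabs (x2 - x1) + sqrt (sqrt ((x2-x1)^4 + (2*a*(z2-z1))^2)).
Proof.
  unfold dka, knorm, hmul, hinv. cbv beta iota.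
  replace ((- x1 + x2) ^ 2 + (- 0 + 0) ^ 2) with (Rsqr (x2 - x1)) by (unfold Rsqr; ring).
  rewrite sqrt_Rsqr_abs.
  f_equal. f_equal. f_equal. unfold Rsqr; ring.
Qed.
Lemma dka_self k a p : dka k a p p = 0.
Proof.
  destruct p as [[x y] z]. unfold dka, knorm, hmul, hinv. cbv beta iota.
  replace ((- x + x) ^ 2 + (- y + y) ^ 2) with 0 by ring.
  replace (- z + z + / 2 * (- x * y - - y * x)) with 0 by ring.
  rewrite sqrt_0. replace (0 ^ 2 + 4 * a ^ 2 * 0 ^ 2) with 0 by ring.
  rewrite !sqrt_0. ring.
Qed.
Lemma sqrt_lo (b y : R) : 0 <= b -> b * b <= y -> b <= sqrt y.
Proof. intros hb hy. rewrite <- (sqrt_square b hb) at 1. apply sqrt_le_1_alt; lra. Qed.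
Lemma sqrt_up (b y : R) : 0 <= b -> y <= b * b -> sqrt y <= b.
Proof. intros hb hy. rewrite <- (sqrt_square b hb). apply sqrt_le_1_alt; lra. Qed.
Lemma Q_lo x u : 0 <= u -> sqrt u <= sqrt (sqrt (x^4 + u^2)).
Proof. intros hu. apply sqrt_le_1_alt. apply sqrt_lo; [lra|]. nra. Qed.
Lemma Q_up x u : 0 <= u -> sqrt (sqrt (x^4 + u^2)) <= sqrt (x^2 + u).
Proof. intros hu. apply sqrt_le_1_alt. apply sqrt_up; nra. Qed.

Definition cond k a (p q : H) := dka k a p O0 < dka k a p q.
Definition pt (s z : R) : H := (s, 0, z).

Lemma step k a m S W : 0 < k -> 0 < a -> 0 < m -> m <= S -> 0 <= W ->
  let D := 2 * (m^2 + W^2) / (k*m) in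
  let K := (k+1)*S + W + W^2 + D + 1 in
  forall s z, m <= s <= S -> 0 <= 2*a*z <= W^2 ->
  cond k a (pt (m/4) (K^2/(2*a))) (pt s z) /\ cond k a (pt s z) (pt (m/4) (K^2/(2*a))).
Proof.
  intros hk ha hm hmS hW D K s z [hs1 hs2] [hz1 hz2].
  assert (hD : D * (k*m) = 2 * (m^2+W^2)) by (unfold D; field; lra).
  assert (hD0 : 0 <= D) by (unfold D; apply Rmult_le_pos; [nra| left; apply Rinv_0_lt_compat; nra]).
  assert (hKdef : K = (k+1)*S + W + W^2 + D + 1) by reflexivity.
  clearbody K D.
  assert (hkS : 0 <= (k+1)*S) by nra.
  assert (hK1 : 1 <= K) by nra.
  remember (2*a*z) as B eqn:hB.
  assert (hWK : W + 1 <= K) by nra.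
  assert (hBK : B <= K^2) by nra.
  assert (hsqK : sqrt (K^2 - B) >= K - B / K).
  { apply Rle_ge, sqrt_lo.
    - apply Rmult_le_reg_r with K; [lra|]. unfold Rdiv. rewrite Rmult_minus_distr_r, Rmult_assoc, Rinv_l by lra. nra.
    - assert (e : (K - B/K)*(K-B/K) = K^2 - 2*B + (B/K)*(B/K)) by (field; lra).
      rewrite e. assert (B/K <= 1 * K) by (apply Rmult_le_reg_r with K; [lra|]; unfold Rdiv; rewrite Rmult_assoc, Rinv_l by lra; nra).
      assert (0 <= B/K). { unfold Rdiv. apply Rmult_le_pos. lra. left; apply Rinv_0_lt_compat; lra. }
      assert (eB : B = (B/K)*K) by (field; lra).
      set (t := B/K) in *. assert (t*t <= t*K) by nra. lra. }
  assert (hBK2 : B / K <= B) by (apply Rmult_le_reg_r with K; [lra|]; unfold Rdiv; rewrite Rmult_assoc, Rinv_l by lra; nra).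
  split; unfold cond, pt, O0; rewrite !dka_plane.
  -
    replace (2 * a * (0 - K ^ 2 / (2 * a))) with (- (K^2)) by (field; lra).
    replace (2 * a * (z - K ^ 2 / (2 * a))) with (- (K^2 - B)) by (rewrite hB; field; lra).
    replace ((- K^2)^2) with ((K^2)^2) by ring.
    replace ((- (K^2 - B))^2) with ((K^2-B)^2) by ring.
    pose proof (Q_up (0 - m/4) (K^2) ltac:(nra)) as h1.
    pose proof (Q_lo (s - m/4) (K^2 - B) ltac:(lra)) as h2.
    assert (h3 : sqrt ((0 - m/4)^2 + K^2) <= K + (m^2)/K).
    { apply sqrt_up; [unfold Rdiv; apply Rplus_le_le_0_compat;[lra| apply Rmult_le_pos;[nra|left; apply Rinv_0_lt_compat; lra]]|].
      assert (e : (K + m^2/K)*(K + m^2/K) = K^2 + 2*m^2 + (m^2/K)*(m^2/K)) by (field; lra).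
      rewrite e. assert (0 <= m^2/K) by (unfold Rdiv; apply Rmult_le_pos;[nra|left; apply Rinv_0_lt_compat; lra]). nra. }
    rewrite Rabs_left by lra. rewrite Rabs_right by lra.
    assert (hE : (m^2 + W^2) / K < k*m/2).
    { apply Rmult_lt_reg_r with K; [lra|]. unfold Rdiv at 1. rewrite Rmult_assoc, Rinv_l, Rmult_1_r by lra.
      assert (D <= K) by nra. nra. }
    assert (hE2 : m^2/K + B/K = (m^2 + B)/K) by (field; lra).
    assert (hE3 : (m^2 + B)/K <= (m^2+W^2)/K) by (apply Rmult_le_compat_r; [left; apply Rinv_0_lt_compat; lra| lra]).
    assert (k*(s - m/4) - k*(m/4) >= k*m/2) by nra. lra.
  -
    replace (2 * a * (0 - z)) with (- B) by (rewrite hB; ring).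
    replace (2 * a * (K ^ 2 / (2 * a) - z)) with (K^2 - B) by (rewrite hB; field; lra).
    replace ((- B)^2) with (B^2) by ring.
    pose proof (Q_up (0 - s) B ltac:(lra)) as h1.
    pose proof (Q_lo (m/4 - s) (K^2 - B) ltac:(lra)) as h2.
    assert (h3 : sqrt ((0 - s)^2 + B) <= s + W) by (apply sqrt_up; nra).
    rewrite (Rabs_left (0 - s)) by lra.
    pose proof (Rabs_pos (m/4 - s)).
    assert (W + W^2 + D + 1 + (k+1)*S <= K) by lra.
    assert (k * s <= k * S) by nra.
    nra.
Qed.

Fixpoint good k a (l : list H) : Prop :=
  match l with
  | nil => True
  | p :: l' => (forall q, In q l' -> cond k a p q /\ cond k a q p) /\ good k a l'
  end.

Lemma family k a : 0 < k -> 0 < a -> forall n : nat, exists l m S W,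
  length l = n /\ good k a l /\ 0 < m /\ m <= S /\ 0 <= W /\
  forall q, In q l -> exists s z, q = pt s z /\ m <= s <= S /\ 0 <= 2*a*z <= W^2.
Proof.
  intros hk ha n. induction n as [|n IH].
  - exists nil, 1, 1, 0. simpl. repeat split; try lra. intros q [].
  - destruct IH as [l [m [S [W [hl [hg [hm [hmS [hW hq]]]]]]]]].
    pose proof (step k a m S W hk ha hm hmS hW) as hs. simpl in hs.
    set (D := 2 * (m^2 + W^2) / (k*m)) in *.
    set (K := (k+1)*S + W + W^2 + D + 1) in *.
    assert (hD0 : 0 <= D) by (unfold D; apply Rmult_le_pos; [nra| left; apply Rinv_0_lt_compat; nra]).
    assert (hWK : W <= K) by (unfold K; nra).
    exists (pt (m/4) (K^2/(2*a)) :: l), (m/4), S, K.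
    split; [simpl; lia|]. split.
    + simpl. split; [|exact hg]. intros q hqin.
      destruct (hq q hqin) as [s [z [-> [h1 h2]]]]. apply hs; assumption.
    + split; [lra|]. split; [lra|]. split; [lra|].
      intros q [<- | hqin].
      * exists (m/4), (K^2/(2*a)). split; [reflexivity|]. split; [lra|].
        replace (2 * a * (K ^ 2 / (2 * a))) with (K^2) by (field; lra). nra.
      * destruct (hq q hqin) as [s [z [-> [h1 h2]]]]. exists s, z. split; [reflexivity|].
        split; [lra|]. nra.
Qed.

Lemma good_pair k a l : good k a l -> forall p q, In p l -> In q l -> p <> q -> cond k a p q.
Proof.
  induction l as [|x l IH]; simpl; [tauto|].
  intros [hx hg] p q [<-|hp] [<-|hq] hne.
  - congruence.
  - apply (hx q hq).
  - apply (hx p hp).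
  - apply IH; auto.
Qed.

Lemma list_bound (f : H -> R) (l : list H) : exists R0, forall a, In a l -> f a <= R0.
Proof.
  induction l as [|x l [R0 IH]].
  - exists 0. intros a [].
  - exists (Rmax (f x) R0). intros a [<-|h]. apply Rmax_l.
    eapply Rle_trans; [apply IH; exact h| apply Rmax_r].
Qed.

Lemma dka_nonneg k a p q : 0 <= k -> 0 <= dka k a p q.
Proof.
  intros hk. destruct p as [[x y] z]. destruct q as [[x' y'] z'].
  unfold dka, knorm, hmul, hinv. cbv beta iota.
  apply Rplus_le_le_0_compat; [apply Rmult_le_pos; [lra| apply sqrt_pos] | apply sqrt_pos].
Qed.

Lemma nodup_balls k a l : 0 <= k -> good k a l ->
  NoDup (map (fun p => cball (dka k a) p (dka k a p O0)) l).
Proof.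
  intros hk. induction l as [|x l IH]; simpl; intros hg; constructor.
  - intros hmap. apply in_map_iff in hmap. destruct hmap as [q [hbq hqin]].
    destruct hg as [hx _]. destruct (hx q hqin) as [_ hc].
    assert (hxx : cball (dka k a) x (dka k a x O0) x).
    { unfold cball. rewrite dka_self. apply dka_nonneg; lra. }
    rewrite <- hbq in hxx. unfold cball in hxx. unfold cond in hc. lra.
  - apply IH. exact (proj2 hg).
Qed.

Theorem mainTheorem8 (kappa alpha : R) (hk : 0 < kappa) (ha : 0 < alpha) (ha2 : alpha <= 2) :
  ~ BCP (dka kappa alpha).
Proof.
  intros [N [HN1 HB]].
  destruct (family kappa alpha hk ha (S N)) as [l [m [S0 [W [hl [hg [hm [hmS [hW hq]]]]]]]]].
  set (d := dka kappa alpha) in *.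
  set (ball := fun p => cball d p (d p O0)).
  destruct (HB (fun x => In x l) (fun T => exists p, In p l /\ T = ball p)) as [F [hF1 [hF2 hF3]]].
  - destruct (list_bound (d O0) l) as [R0 hR0]. exists O0, R0. exact hR0.
  - intros T [p [hp ->]]. exists p, (d p O0). split; [|reflexivity].
    destruct (hq p hp) as [s [z [-> [h1 h2]]]].
    unfold d, pt, O0. rewrite dka_plane. rewrite Rabs_left by lra.
    pose proof (sqrt_pos (sqrt ((0 - s) ^ 4 + (2 * alpha * (0 - z)) ^ 2))). nra.
  - intros x hx. exists (ball x). split; [exists x; auto|].
    exists (d x O0). split; [|reflexivity].
    destruct (hq x hx) as [s [z [-> [h1 h2]]]].
    unfold d, pt, O0. rewrite dka_plane. rewrite Rabs_left by lra.
    pose proof (sqrt_pos (sqrt ((0 - s) ^ 4 + (2 * alpha * (0 - z)) ^ 2))). nra.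
  - assert (hin : forall p, In p l -> F (ball p)).
    { intros p hp. destruct (hF2 p hp) as [T [hT hTp]].
      destruct (hF1 T hT) as [q [hqin ->]].
      destruct (Classical_Prop.classic (q = p)) as [<-|hne]; [exact hT|].
      exfalso. pose proof (good_pair _ _ _ hg q p hqin hp hne) as hc.
      unfold cond in hc. unfold ball, cball in hTp. fold d in hc. lra. }
    assert (hnd : NoDup (map ball l)) by (apply nodup_balls; lra || exact hg).
    pose proof (hF3 O0 (map ball l) hnd) as hlen.
    rewrite length_map, hl in hlen.
    assert (S N <= N)%nat.
    { apply hlen. intros T hT. apply in_map_iff in hT. destruct hT as [p [<- hp]].
      split; [apply hin; exact hp|]. unfold ball, cball. lra. }
    lia.
Qed.
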